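(* Let $K$ be a field, $I\subset R=K[x_1,\ldots,x_n]$ a monomial ideal, and $h$ a monomial in $R$ such that $\gcd(h,u)=1$ for every minimal monomial generator $u$ of $I$. Then $I$ has the nearly copersistence property if and only if $hI$ has the nearly copersistence property.
   Context: A monomial ideal $I\subset R$ has the nearly copersistence property if there exist a positive integer $s$ and a monomial prime ideal $\mathfrak{p}$ such that $\mathrm{Ass}_R(R/I^m)\cup\{\mathfrak{p}\}\supseteq\mathrm{Ass}_R(R/I^{m+1})$ for all $1\le m\le s$, and $\mathrm{Ass}_R(R/I^m)\supseteq\mathrm{Ass}_R(R/I^{m+1})$ for all $m\ge s+1$. *)

(* Defs.v *)
From HB Require Import structures.
From mathcomp Require Import all_boot all_order all_algebra.
From mathcomp Require Import mpoly.
Set Implicit Arguments. Unset Strict Implicit. Unset Printing Implicit Defensive.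
Import GRing.Theory.
Local Open Scope ring_scope.

Section Defs.
Variables (K : fieldType) (n : nat).
Local Notation R := {mpoly K[n]}.

Definition ideal_gen (S : R -> Prop) : R -> Prop :=
  fun f => exists r : seq (R * R),
    (forall x, x \in r -> S x.1) /\ f = \sum_(x <- r) x.2 * x.1.

Definition is_ideal (J : R -> Prop) : Prop :=
  J 0 /\ (forall f g, J f -> J g -> J (f + g)) /\ (forall a f, J f -> J (a * f)).

Definition is_prime_ideal (P : R -> Prop) : Prop :=
  is_ideal P /\ ~ P 1 /\ (forall f g, P (f * g) -> P f \/ P g).

Definition is_monomial (f : R) : Prop := exists m : 'X_{1..n}, f = 'X_[m].

Definition is_monomial_ideal (J : R -> Prop) : Prop :=
  exists S : R -> Prop, (forall f, S f -> is_monomial f) /\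
    (forall f, J f <-> ideal_gen S f).

Definition is_monomial_prime (P : R -> Prop) : Prop :=
  exists A : {set 'I_n},
    forall f, P f <-> ideal_gen (fun g => exists2 i, i \in A & g = 'X_i) f.

Definition ideal_mul (J1 J2 : R -> Prop) : R -> Prop :=
  ideal_gen (fun f => exists g h, J1 g /\ J2 h /\ f = g * h).

Fixpoint ideal_pow (J : R -> Prop) (m : nat) : R -> Prop :=
  match m with
  | 0 => fun _ => True
  | m'.+1 => ideal_mul (ideal_pow J m') J
  end.

Definition ideal_scale (h : R) (J : R -> Prop) : R -> Prop :=
  ideal_gen (fun f => exists2 g, J g & f = h * g).

(* P \in Ass_R(R/J): P is a prime ideal with P = (J : f) for some f in R *)
Definition Ass (J : R -> Prop) (P : R -> Prop) : Prop :=
  is_prime_ideal P /\ exists f : R, forall g, P g <-> J (g * f).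

Definition same_ideal (P Q : R -> Prop) : Prop := forall f, P f <-> Q f.

Definition nearly_copersistent (I : R -> Prop) : Prop :=
  exists (s : nat) (p : R -> Prop), (0 < s)%N /\ is_monomial_prime p /\
    (forall m, (1 <= m <= s)%N -> forall P,
        Ass (ideal_pow I m.+1) P -> Ass (ideal_pow I m) P \/ same_ideal P p) /\
    (forall m, (s.+1 <= m)%N -> forall P,
        Ass (ideal_pow I m.+1) P -> Ass (ideal_pow I m) P).

Definition mgcd (a b : 'X_{1..n}) : 'X_{1..n} :=
  [multinom minn (a i) (b i) | i < n].

Definition min_mon_gen (J : R -> Prop) (m : 'X_{1..n}) : Prop :=
  J 'X_[m] /\ (forall m' : 'X_{1..n}, J 'X_[m'] -> (m' <= m)%MM -> m' = m).

End Defs.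

(* Main.v *)
Require Import Defs.
From Stdlib Require Import Classical FunctionalExtensionality PropExtensionality.
From HB Require Import structures.
From mathcomp Require Import all_boot all_order all_algebra.
From mathcomp Require Import mpoly ring zify.
Import GRing.Theory.
Local Open Scope ring_scope.
Set Implicit Arguments. Unset Strict Implicit.

Section S.
Variables (K : fieldType) (n : nat).
Local Notation R := {mpoly K[n]}.

Lemma coefMX (p : R) d m : (p * 'X_[d])@_m = if (d <= m)%MM then p@_(m - d) else 0.
Proof.
case: ifP => h; first by rewrite -{1}(submK h) addmC mcoeffMX.
apply/memN_msupp_eq0; apply/negP => Hm.
have := perm_mem (msuppMX p d) m; rewrite Hm => /esym/mapP [m' _ Em].
by move: h; rewrite Em lem_addr.
Qed.

Lemma coefXM (p : R) d m : ('X_[d] * p)@_m = if (d <= m)%MM then p@_(m - d) else 0.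
Proof. by rewrite mulrC coefMX. Qed.

Definition Div d (F : R) := exists q, F = 'X_[d] * q.

Lemma DivP d (F : R) : Div d F <-> (forall m, F@_m != 0 -> (d <= m)%MM).
Proof.
split.
  move=> [q ->] m; rewrite coefXM; case: ifP => //; by rewrite eqxx.
move=> H; exists (\sum_(m <- msupp F) F@_m *: 'X_[m - d]).
rewrite {1}(mpolyE F) mulr_sumr big_seq [RHS]big_seq; apply: eq_bigr => m Hm.
rewrite -scalerAr -mpolyXD addmC submK //; apply: H; by rewrite -mcoeff_msupp.
Qed.

Lemma lemU (j : 'I_n) (m : 'X_{1..n}) : (U_(j) <= m)%MM = (0 < m j)%N.
Proof.
apply/mnm_lepP/idP => [/(_ j)|H i]; first by rewrite mnm1E eqxx.
by rewrite mnm1E; case: eqP => [<-|].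
Qed.

Lemma sum_coef0 (s : seq 'X_{1..n}) (P : pred 'X_{1..n}) (c : 'X_{1..n} -> K) k :
  (forall m, P m -> m != k) -> (\sum_(m <- s | P m) c m *: 'X_[m] : R)@_k = 0.
Proof.
move=> H; rewrite raddf_sum big1 // => m Pm.
by rewrite /= mcoeffZ mcoeffX (negbTE (H m Pm)) mulr0.
Qed.

Definition NoX (j : 'I_n) (F : R) := forall m : 'X_{1..n}, (0 < m j)%N -> F@_m = 0.

Lemma split_j (j : 'I_n) (F : R) : exists F0 F1,
  F = F0 + 'X_j * F1 /\ NoX j F0 /\ (forall m : 'X_{1..n}, m j = 0%N -> F0@_m = F@_m).
Proof.
set F0 := \sum_(m <- msupp F | m j == 0%N) F@_m *: 'X_[m].
set F' := \sum_(m <- msupp F | m j != 0%N) F@_m *: 'X_[m].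
have EF : F = F0 + F' by rewrite {1}(mpolyE F) (bigID (fun m : 'X_{1..n} => m j == 0%N)).
have F'0 : forall m : 'X_{1..n}, m j = 0%N -> F'@_m = 0.
  move=> m Hm; apply: sum_coef0 => m' Hm'; apply/eqP => E; move: Hm'; by rewrite E Hm.
have [F1 EF1] : Div U_(j) F'.
  apply/DivP => m Hm; rewrite lemU lt0n; apply/eqP => E; by rewrite F'0 ?eqxx in Hm.
exists F0, F1; split; first by rewrite -EF1.
split.
  move=> m Hm; apply: sum_coef0 => m' /eqP Hm'; apply/eqP => E; move: Hm; by rewrite -E Hm'.
by move=> m Hm; rewrite EF mcoeffD F'0 // addr0.
Qed.

Lemma NoXM j (F G : R) : NoX j F -> NoX j G -> NoX j (F * G).
Proof.
move=> HF HG m Hm; rewrite mcoeffM big1 // => k /eqP Ek.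
have H2 : (0 < (k.1 + k.2)%MM j)%N by rewrite -Ek.
move: H2; rewrite mnmDE addn_gt0 => /orP [/HF ->|/HG ->]; by rewrite ?mul0r ?mulr0.
Qed.

Definition Lp (j : 'I_n) (F : R) := exists m : 'X_{1..n}, m j = 0%N /\ F@_m != 0.

Lemma Lp_notDiv j (F : R) : Lp j F <-> ~ Div U_(j) F.
Proof.
split.
  move=> [m [Hm HF]] /DivP /(_ m HF); by rewrite lemU Hm.
move=> HD; apply: NNPP => HL; apply: HD; apply/DivP => m Hm.
rewrite lemU lt0n; apply/negP => /eqP E; apply: HL; by exists m.
Qed.

Lemma LpM j (F G : R) : Lp j F -> Lp j G -> Lp j (F * G).
Proof.
move=> [mf [Hmf Hf]] [mg [Hmg Hg]].
have [F0 [F1 [EF [NF CF]]]] := split_j j F.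
have [G0 [G1 [EG [NG CG]]]] := split_j j G.
have F0n : F0 != 0 by apply/eqP => E; move: Hf; rewrite -CF // E mcoeff0 eqxx.
have G0n : G0 != 0 by apply/eqP => E; move: Hg; rewrite -CG // E mcoeff0 eqxx.
have FG0 : F0 * G0 != 0 by rewrite mulf_neq0.
have : msupp (F0 * G0) != [::] by rewrite msupp_eq0.
case E: (msupp (F0 * G0)) => [|k s] // _.
have Hk : (F0 * G0)@_k != 0 by rewrite -mcoeff_msupp E mem_head.
have Hkj : k j = 0%N.
  apply/eqP; rewrite -leqn0 leqNgt; apply/negP => /(NoXM NF NG) H; by rewrite H eqxx in Hk.
exists k; split => //.
have -> : F * G = F0 * G0 + 'X_j * (F1 * G0 + F0 * G1 + 'X_j * F1 * G1).
  rewrite EF EG; ring.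
by rewrite mcoeffD coefXM lemU Hkj /= addr0.
Qed.


Lemma pred_ext (P Q : R -> Prop) : (forall x, P x <-> Q x) -> P = Q.
Proof. move=> H; apply: functional_extensionality => x; exact: propositional_extensionality. Qed.

Lemma gen_ideal (S : R -> Prop) : is_ideal (ideal_gen S).
Proof.
split; first by exists [::]; split => //; rewrite big_nil.
split.
  move=> f g [r1 [H1 ->]] [r2 [H2 ->]]; exists (r1 ++ r2); split; last by rewrite big_cat.
  by move=> x; rewrite mem_cat => /orP []; auto.
move=> c f [r [H ->]]; exists [seq (x.1, c * x.2) | x <- r]; split.
  move=> x /mapP [y Hy ->] /=; exact: H.
rewrite big_map mulr_sumr; apply: eq_bigr => x _ /=; by rewrite mulrA.
Qed.

Lemma gen_incl (S : R -> Prop) f : S f -> ideal_gen S f.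
Proof.
move=> Hf; exists [:: (f, 1)]; split; last by rewrite big_seq1 mul1r.
by move=> x; rewrite inE => /eqP ->.
Qed.

Lemma ideal_sum (T : eqType) (J : R -> Prop) (s : seq T) (F : T -> R) :
  is_ideal J -> (forall x, x \in s -> J (F x)) -> J (\sum_(x <- s) F x).
Proof.
move=> [H0 [HD HM]]; elim: s => [|x s IH] H; first by rewrite big_nil.
rewrite big_cons; apply: HD; first by apply: H; rewrite mem_head.
by apply: IH => y Hy; apply: H; rewrite inE Hy orbT.
Qed.

Lemma gen_min (S J : R -> Prop) : is_ideal J -> (forall f, S f -> J f) ->
  forall f, ideal_gen S f -> J f.
Proof.
move=> HJ HS f [r [Hr ->]]; apply: ideal_sum => // x Hx.
case: HJ => [_ [_ HM]]; apply: HM; apply: HS; exact: Hr.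
Qed.

Lemma idealM (J : R -> Prop) a f : is_ideal J -> J f -> J (a * f).
Proof. by move=> [_ [_ HM]]; apply: HM. Qed.
Lemma idealMr (J : R -> Prop) a f : is_ideal J -> J f -> J (f * a).
Proof. by move=> HJ Hf; rewrite mulrC; apply: idealM. Qed.
Lemma idealD (J : R -> Prop) f g : is_ideal J -> J f -> J g -> J (f + g).
Proof. by move=> [_ [HD _]]; apply: HD. Qed.
Lemma ideal0 (J : R -> Prop) : is_ideal J -> J 0.
Proof. by case. Qed.
Lemma idealB (J : R -> Prop) f g : is_ideal J -> J f -> J g -> J (f - g).
Proof.
move=> HJ Hf Hg; apply: idealD => //; rewrite -mulN1r; exact: idealM.
Qed.
Lemma idealZ (J : R -> Prop) c f : is_ideal J -> J f -> J (c *: f).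
Proof. by move=> HJ Hf; rewrite -mul_mpolyC; apply: idealM. Qed.

Lemma pow_ideal (I : R -> Prop) k : is_ideal I -> is_ideal (ideal_pow I k).
Proof. by move=> HI; case: k => [|k] /=; [do 2 split => // | exact: gen_ideal]. Qed.

Definition sc (g : R) (J : R -> Prop) := fun f => exists2 q, J q & f = g * q.

Lemma sc_ideal g J : is_ideal J -> is_ideal (sc g J).
Proof.
move=> HJ; split; first by exists 0; [exact: ideal0 | rewrite mulr0].
split.
  move=> f1 f2 [q1 H1 ->] [q2 H2 ->]; exists (q1 + q2); [exact: idealD | by rewrite mulrDr].
move=> a f [q H ->]; exists (a * q); [exact: idealM | by rewrite mulrCA].
Qed.

Lemma scale_eq h J : is_ideal J -> forall f, ideal_scale h J f <-> sc h J f.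
Proof.
move=> HJ f; split; last by move=> [q Hq ->]; apply: gen_incl; exists q.
apply: gen_min; first exact: sc_ideal.
by move=> g [q Hq ->]; exists q.
Qed.

Lemma pow_scale h (I : R -> Prop) : is_ideal I -> forall k f,
  ideal_pow (ideal_scale h I) k f <-> sc (h ^+ k) (ideal_pow I k) f.
Proof.
move=> HI; elim=> [|k IH] f /=.
  by split => // _; exists f => //; rewrite expr0 mul1r.
split.
  apply: gen_min; first by apply: sc_ideal; exact: gen_ideal.
  move=> g [g1 [g2 [H1 [H2 ->]]]].
  have [q1 Hq1 ->] := (IH g1).1 H1.
  have [q2 Hq2 ->] := (scale_eq h HI g2).1 H2.
  exists (q1 * q2); first by apply: gen_incl; exists q1, q2.
  by rewrite exprSr mulrACA.
move=> [q Hq ->]; move: q Hq.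
pose T := fun q => ideal_mul (ideal_pow (ideal_scale h I) k) (ideal_scale h I) (h ^+ k.+1 * q).
have HT : is_ideal T.
  split; first by rewrite /T mulr0; apply: ideal0; exact: gen_ideal.
  split.
    move=> f1 f2 H1 H2; rewrite /T mulrDr; apply: idealD => //; exact: gen_ideal.
  move=> a f1 H1; rewrite /T mulrCA; apply: idealM => //; exact: gen_ideal.
apply: (gen_min HT) => g [g1 [g2 [H1 [H2 ->]]]].
rewrite /T; apply: gen_incl; exists (h ^+ k * g1), (h * g2); split.
  by apply/IH; exists g1.
split; first by apply/scale_eq => //; exists g2.
by rewrite exprSr mulrACA.
Qed.

Lemma Ass_ext (J J' : R -> Prop) P : (forall f, J f <-> J' f) -> Ass J P -> Ass J' P.
Proof.
move=> H [HP [f Hf]]; split => //; exists f => g; rewrite Hf; exact: H.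
Qed.

Lemma Ass_same (J : R -> Prop) P Q : Ass J P -> same_ideal P Q -> Ass J Q.
Proof. by move=> HA HPQ; rewrite -(pred_ext HPQ). Qed.


Definition MonS (S : R -> Prop) := forall f, S f -> exists m, f = 'X_[m].
Definition MC (J : R -> Prop) := forall F, J F -> forall m, J (F@_m *: 'X_[m]).

Lemma term_gen (S : R -> Prop) q e m : S 'X_[e] ->
  ideal_gen S ((q * 'X_[e])@_m *: 'X_[m]).
Proof.
move=> He; rewrite coefMX; case: ifP => h; last first.
  rewrite scale0r; apply: ideal0; exact: gen_ideal.
have -> : 'X_[m] = 'X_[(m - e)%MM] * 'X_[e] :> R by rewrite -mpolyXD submK.
rewrite scalerAl; apply: idealM; [exact: gen_ideal | exact: gen_incl].
Qed.

Lemma gen_MC (S : R -> Prop) : MonS S -> MC (ideal_gen S).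
Proof.
move=> HS F [r [Hr ->]] m; rewrite raddf_sum /= scaler_suml.
apply: ideal_sum; first exact: gen_ideal.
move=> x Hx; have [e Ee] := HS _ (Hr x Hx); rewrite Ee; apply: term_gen.
by rewrite -Ee; apply: Hr.
Qed.

Lemma gen_div (S : R -> Prop) F p : MonS S -> ideal_gen S F -> F@_p != 0 ->
  exists e, S 'X_[e] /\ (e <= p)%MM.
Proof.
move=> HS [r [Hr ->]] Hp; apply: NNPP => Hn; move/eqP: Hp; apply.
rewrite raddf_sum big1_seq // => x Hx /=.
have [e Ee] := HS _ (Hr x Hx); rewrite Ee coefMX; case: ifP => // h.
by exfalso; apply: Hn; exists e; split => //; rewrite -Ee; apply: Hr.
Qed.

Lemma MC_mon (J : R -> Prop) F m : is_ideal J -> MC J -> J F -> F@_m != 0 -> J 'X_[m].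
Proof.
move=> HJ HM HF Hm; have := idealZ (F@_m)^-1 HJ (HM F HF m).
by rewrite scalerA mulVf // scale1r.
Qed.

Lemma Xinj (m1 m2 : 'X_{1..n}) : 'X_[m1] = 'X_[m2] :> R -> m1 = m2.
Proof.
move=> E; have := congr1 (mcoeff m2) E; rewrite !mcoeffX eqxx.
case: eqP => // _ /eqP; by rewrite eq_sym oner_eq0.
Qed.

Lemma mingen (J : R -> Prop) : forall N e, (mdeg e < N)%N -> J 'X_[e] ->
  exists u, min_mon_gen J u /\ (u <= e)%MM.
Proof.
elim=> [//|N IH] e He HJ.
case: (classic (min_mon_gen J e)) => H; first by exists e; split => //; exact: lepm_refl.
have [m' [Hm' [Hle Hne]]] : exists m', J 'X_[m'] /\ (m' <= e)%MM /\ m' <> e.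
  apply: NNPP => Hn; apply: H; split => // m' Hm' Hle; apply: NNPP => Hne.
  by apply: Hn; exists m'.
have Hd : (mdeg m' < mdeg e)%N.
  rewrite -(submK Hle) mdegD -{1}[mdeg m']add0n ltn_add2r lt0n mdeg_eq0.
  apply/eqP => E; apply: Hne; by rewrite -(submK Hle) E add0m.
have [u [Hu Hue]] := IH m' (leq_trans Hd (ltnSE He)) Hm'.
exists u; split => //; exact: lepm_trans Hue Hle.
Qed.

Variable a : 'X_{1..n}.

Definition zf (m : 'X_{1..n}) : 'X_{1..n} := [multinom if a i == 0%N then m i else 0%N | i < n].
Definition ZF (J : R -> Prop) := forall m, J 'X_[m] -> J 'X_[zf m].

Lemma zf_le m : (zf m <= m)%MM.
Proof. apply/mnm_lepP => i; rewrite mnmE; by case: ifP. Qed.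

Lemma zf_add m1 m2 : zf (m1 + m2)%MM = (zf m1 + zf m2)%MM.
Proof. apply/mnmP => i; rewrite !mnmE; by case: ifP. Qed.

Lemma zf_mono m1 m2 : (m1 <= m2)%MM -> (zf m1 <= zf m2)%MM.
Proof. move/mnm_lepP => H; apply/mnm_lepP => i; rewrite !mnmE; by case: ifP. Qed.

Lemma zf_c (c : 'X_{1..n}) : (forall i, a i = 0%N -> c i = 0%N) -> zf c = 0%MM.
Proof. move=> H; apply/mnmP => i; rewrite !mnmE; case: ifP => // /eqP; exact: H. Qed.

Lemma zf_j m (j : 'I_n) : (0 < a j)%N -> zf m j = 0%N.
Proof. by rewrite mnmE lt0n => /negbTE ->. Qed.

Lemma ZF_ideal (J : R -> Prop) m : is_ideal J -> ZF J -> J 'X_[zf m] -> J 'X_[m].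
Proof.
move=> HJ _ H; rewrite -(submK (zf_le m)) mpolyXD; exact: idealM.
Qed.

Lemma regular (J : R -> Prop) (c : 'X_{1..n}) z : is_ideal J -> MC J -> ZF J ->
  (forall i, a i = 0%N -> c i = 0%N) -> J ('X_[c] * z) -> J z.
Proof.
move=> HJ HM HZ Hc H; rewrite (mpolyE z); apply: ideal_sum => // m _.
have := HM _ H (c + m)%MM; rewrite mulrC mcoeffMX.
have [->|Hz] := eqVneq z@_m 0; first by rewrite !scale0r.
move=> H2; apply: idealZ => //.
have H3 : J 'X_[(c + m)%MM] by have := idealZ (z@_m)^-1 HJ H2; rewrite scalerA mulVf // scale1r.
apply: (ZF_ideal HJ HZ); have := HZ _ H3; by rewrite zf_add zf_c // add0m.
Qed.

Definition Tset (J1 J2 : R -> Prop) := fun f : R =>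
  exists m1 m2, J1 'X_[m1] /\ J2 'X_[m2] /\ f = 'X_[(m1 + m2)%MM].

Lemma mul_eq (J1 J2 : R -> Prop) : is_ideal J1 -> is_ideal J2 -> MC J1 -> MC J2 ->
  forall f, ideal_mul J1 J2 f <-> ideal_gen (Tset J1 J2) f.
Proof.
move=> H1 H2 M1 M2 f; split.
  apply: gen_min; first exact: gen_ideal.
  move=> g [g1 [g2 [G1 [G2 ->]]]].
  rewrite (mpolyE g1) (mpolyE g2) mulr_suml; apply: ideal_sum; first exact: gen_ideal.
  move=> m1 Hm1; rewrite mulr_sumr; apply: ideal_sum; first exact: gen_ideal.
  move=> m2 Hm2; rewrite -scalerAl -scalerAr scalerA -mpolyXD.
  apply: idealZ; first exact: gen_ideal.
  apply: gen_incl; exists m1, m2; split; first by apply: (MC_mon H1 M1 G1); rewrite -mcoeff_msupp.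
  by split => //; apply: (MC_mon H2 M2 G2); rewrite -mcoeff_msupp.
apply: gen_min; first exact: gen_ideal.
move=> g [m1 [m2 [G1 [G2 ->]]]]; rewrite mpolyXD; apply: gen_incl; by exists 'X_[m1], 'X_[m2].
Qed.

Lemma mul_props (J1 J2 : R -> Prop) : is_ideal J1 -> is_ideal J2 -> MC J1 -> MC J2 ->
  ZF J1 -> ZF J2 -> MC (ideal_mul J1 J2) /\ ZF (ideal_mul J1 J2).
Proof.
move=> H1 H2 M1 M2 Z1 Z2.
have HT : MonS (Tset J1 J2) by move=> f [m1 [m2 [_ [_ ->]]]]; eexists.
have E := pred_ext (mul_eq H1 H2 M1 M2); rewrite E; split; first exact: gen_MC.
move=> p Hp; have := gen_div (p := p) HT Hp; rewrite mcoeffX eqxx oner_eq0 => /(_ isT).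
move=> [e [[m1 [m2 [G1 [G2 /Xinj Ee]]]] Hle]].
have Hz := zf_mono Hle; rewrite Ee zf_add in Hz.
rewrite -(submK Hz) mpolyXD; apply: idealM; first exact: gen_ideal.
apply: gen_incl; exists (zf m1), (zf m2); split; [exact: Z1|split; [exact: Z2|done]].
Qed.

Lemma pow_props (I : R -> Prop) : is_ideal I -> MC I -> ZF I ->
  forall k, is_ideal (ideal_pow I k) /\ MC (ideal_pow I k) /\ ZF (ideal_pow I k).
Proof.
move=> HI MI ZI; elim=> [|k [IH1 [IH2 IH3]]] /=; first by do 2 split => //.
split; first exact: gen_ideal.
exact: mul_props.
Qed.


Lemma X_neq0 (m : 'X_{1..n}) : 'X_[m] != 0 :> R.
Proof. apply/eqP => E; have := congr1 (mcoeff m) E; rewrite mcoeffX eqxx mcoeff0 => /eqP; by rewrite oner_eq0. Qed.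

Lemma prime_prod (P : R -> Prop) (T : Type) (r : seq T) (F : T -> R) :
  is_prime_ideal P -> P (\prod_(i <- r) F i) -> exists i, P (F i).
Proof.
move=> [HI [H1 HP]]; elim: r => [|x r IH]; first by rewrite big_nil.
by rewrite big_cons => /HP [H|/IH //]; exists x.
Qed.

Lemma prime_pow (P : R -> Prop) x k : is_prime_ideal P -> P (x ^+ k) -> (0 < k)%N /\ P x.
Proof.
move=> [HI [H1 HP]]; elim: k => [|k IH]; first by rewrite expr0.
by rewrite exprS => /HP [H|/IH [_ H]].
Qed.

Lemma Divj_prime (j : 'I_n) : is_prime_ideal (Div U_(j)).
Proof.
split.
  split; first by exists 0; rewrite mulr0.
  split; first by move=> f g [q1 ->] [q2 ->]; exists (q1 + q2); rewrite mulrDr.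
  by move=> c f [q ->]; exists (c * q); rewrite mulrCA.
split.
  move/DivP/(_ 0%MM); rewrite mcoeff1 eqxx oner_eq0 lemU mnm0E => /(_ isT); done.
move=> f g H; apply: NNPP => Hn.
have Lf : Lp j f by apply/Lp_notDiv => Hf; apply: Hn; left.
have Lg : Lp j g by apply/Lp_notDiv => Hg; apply: Hn; right.
by move/Lp_notDiv: (LpM Lf Lg).
Qed.

Lemma colon_prime (b : 'X_{1..n}) (f : R) (P : R -> Prop) :
  is_prime_ideal P -> (forall y, P y <-> Div b (y * f)) ->
  exists j : 'I_n, (0 < b j)%N /\ forall y, P y <-> Div U_(j) y.
Proof.
move=> HP HPf; have [HI [H1 HPr]] := HP.
have fn0 : f != 0.
  apply/eqP => E; apply: H1; apply/HPf; exists 0; by rewrite E !mulr0.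
have : msupp f != [::] by rewrite msupp_eq0.
case Es: (msupp f) => [|m0 s] // _.
have Hex : forall i : 'I_n, exists k, has (fun m : 'X_{1..n} => m i == k) (msupp f).
  move=> i; exists (m0 i); apply/hasP; exists m0 => //; by rewrite Es mem_head.
pose al := fun i => ex_minn (Hex i).
have Hal1 : forall i m, m \in msupp f -> (al i <= m i)%N.
  move=> i m Hm; rewrite /al; case: ex_minnP => k _ Hk; apply: Hk.
  by apply/hasP; exists m.
have Hal2 : forall i, exists2 m, m \in msupp f & m i = al i.
  move=> i; rewrite /al; case: ex_minnP => k /hasP [m Hm /eqP Hmk] _; by exists m.
pose c := [multinom (b i - al i)%N | i < n].
have Pc : P 'X_[c].
  apply/HPf; apply/DivP => m; rewrite coefXM; case: ifP => [Hcm|]; last by rewrite eqxx.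
  rewrite -mcoeff_msupp => /Hal1 Hm; apply/mnm_lepP => i.
  move: (Hm i) (mnm_lepP Hcm i); rewrite /c !mnmE; lia.
move: Pc; rewrite mpolyXE_id => /(prime_prod HP) [j] /(prime_pow HP) [Hcj Pj].
move: Hcj; rewrite mnmE => Hcj.
exists j; split; first lia.
move=> y; split; last first.
  move=> [q ->]; rewrite mulrC; exact: idealM.
move=> Py; apply: NNPP => /Lp_notDiv Ly.
have [ms Hms Emj] := Hal2 j.
pose d := (U_(j) *+ al j)%MM.
have Hdf : Div d f.
  apply/DivP => m; rewrite -mcoeff_msupp => /(Hal1 j) Hm; apply/mnm_lepP => i; rewrite mulmnE mnm1E.
  by case: eqP => [<-|]; rewrite ?mul1n ?mul0n.
have Hdms : (d <= ms)%MM.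
  apply/mnm_lepP => i; rewrite mulmnE mnm1E.
  case: eqP => [<-|]; rewrite ?mul1n ?mul0n //; by rewrite Emj.
have [f1 Ef1] := Hdf.
have Lf1 : Lp j f1.
  exists (ms - d)%MM; split; first by rewrite mnmBE mulmnE mnm1E eqxx mul1n Emj subnn.
  have := Hms; rewrite mcoeff_msupp Ef1 coefXM Hdms; done.
have [k [Hkj Hk]] := LpM Ly Lf1.
have /HPf /DivP /(_ (d + k)%MM) : P y := Py.
rewrite Ef1 mulrCA coefXM lem_addr addmC addmK => /(_ Hk) /mnm_lepP /(_ j).
rewrite mnmDE mulmnE mnm1E eqxx mul1n Hkj; lia.
Qed.

Lemma Ass_split (J : R -> Prop) (b : 'X_{1..n}) P : is_ideal J -> MC J -> ZF J ->
  (forall i, a i = 0%N -> b i = 0%N) -> Ass (sc 'X_[b] J) P ->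
  Ass J P \/ (is_prime_ideal P /\ exists f, forall y, P y <-> Div b (y * f)).
Proof.
move=> HJ MJ ZJ Hb [HP [f Hf]].
have E : forall y, P y <-> Div b (y * f) /\ J (y * f).
  move=> y; rewrite Hf; split.
    move=> [q Hq E]; split; first by exists q.
    rewrite E; exact: idealM.
  move=> [[q E] H]; exists q => //; apply: (regular HJ MJ ZJ Hb); by rewrite -E.
case: (classic (forall y, Div b (y * f) -> P y)) => H.
  right; split => //; exists f => y; split; [by move/E => [] | exact: H].
left; split => //; exists f => y; split; first by move/E => [].
move=> Jy; have [z Hz] : exists z, Div b (z * f) /\ ~ P z.
  by apply: NNPP => Hn; apply: H => z Hz; apply: NNPP => Hnz; apply: Hn; exists z.
case: Hz => [[q Eq] Nz].
have : P (z * y).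
  apply/E; split; first by exists (q * y); rewrite mulrAC Eq mulrA.
  by rewrite -mulrA; apply: idealM.
by case: HP => [_ [_ HPr]] /HPr [].
Qed.

Lemma Ass_xj (J : R -> Prop) k (j : 'I_n) e : is_ideal J -> (0 < k)%N -> (0 < a j)%N ->
  J 'X_[e] -> e j = 0%N -> Ass (sc 'X_[a *+ k] J) (Div U_(j)).
Proof.
move=> HJ Hk Ha He Ej; split; first exact: Divj_prime.
have HU : (U_(j) <= a *+ k)%MM by rewrite lemU mulmnE muln_gt0 Ha.
exists 'X_[(a *+ k - U_(j) + e)%MM] => y; split.
  move=> [q ->]; exists (q * 'X_[e]); first exact: idealM.
  rewrite -[in RHS](submK HU) !mpolyXD; ring.
move=> [q Hq E]; apply/DivP => m Hm.
have : (y * 'X_[(a *+ k - U_(j) + e)%MM])@_((a *+ k - U_(j) + e) + m)%MM != 0 by rewrite mcoeffMX.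
rewrite E coefXM; case: ifP => [/mnm_lepP /(_ j)|]; last by rewrite eqxx.
rewrite lemU !mnmDE mnmBE mulmnE mnm1E eqxx Ej => H _; move: Ha Hk H; clear; nia.
Qed.

End S.

Unset Implicit Arguments.
Set Strict Implicit.

Theorem proposition4p10 (K : fieldType) (n : nat) (I : {mpoly K[n]} -> Prop)
    (a : 'X_{1..n}) :
  is_monomial_ideal I ->
  (forall u : 'X_{1..n}, min_mon_gen I u -> mgcd a u = 0%MM) ->
  (nearly_copersistent I <-> nearly_copersistent (ideal_scale 'X_[a] I)).
Proof.
move=> [S [HS HIS]] Hgen.
have EI : I = ideal_gen S := pred_ext HIS.
have HI : is_ideal I by rewrite EI; exact: gen_ideal.
have MI : MC I by rewrite EI; apply: gen_MC => f /HS.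
have ZI : ZF a I.
  move=> m Hm; have [u [Hu Hle]] := mingen (ltnSn (mdeg m)) Hm.
  have Huz : (u <= zf a m)%MM.
    apply/mnm_lepP => i; rewrite mnmE; case: ifP => Hai; first exact: (mnm_lepP Hle i).
    have := congr1 (fun x : 'X_{1..n} => x i) (Hgen u Hu); rewrite /= /mgcd mnmE mnm0E.
    move: Hai => /negbT; rewrite -lt0n; lia.
  rewrite -(submK Huz) mpolyXD; apply: idealM HI _; exact: Hu.1.
have Pk := pow_props HI MI ZI.
have EB : forall k P, Ass (ideal_pow (ideal_scale 'X_[a] I) k) P <->
    Ass (sc 'X_[(a *+ k)%MM] (ideal_pow I k)) P.
  move=> k P; have E := pred_ext (pow_scale 'X_[a] HI k); by rewrite E mpolyXn.
have Hsupp : forall k i, a i = 0%N -> (a *+ k)%MM i = 0%N by move=> k i H; rewrite mulmnE H.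
have L1 : forall k P, Ass (ideal_pow I k) P -> Ass (sc 'X_[(a *+ k)%MM] (ideal_pow I k)) P.
  move=> k P [HP [f Hf]]; split => //; exists ('X_[(a *+ k)%MM] * f) => y; rewrite Hf; split.
    by move=> Hy; exists (y * f) => //; rewrite mulrCA.
  move=> [q Hq E]; suff -> : y * f = q by [].
  have Xn := X_neq0 K (a *+ k)%MM.
  apply: (mulfI Xn); by rewrite -E mulrCA.
have Ipos : forall k F, (0 < k)%N -> ideal_pow I k F -> I F.
  case=> // k F _ /=; apply: (gen_min HI) => g [g1 [g2 [_ [H2 ->]]]]; exact: idealM.
have pow_mem : forall k x, I x -> ideal_pow I k (x ^+ k).
  move=> k x Hx; elim: k => [|k IH] //=; apply: gen_incl; exists (x ^+ k), x; by rewrite exprSr.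
have StepF : forall m P, (0 < m)%N ->
    Ass (sc 'X_[(a *+ m.+1)%MM] (ideal_pow I m.+1)) P ->
    Ass (ideal_pow I m.+1) P \/ Ass (sc 'X_[(a *+ m)%MM] (ideal_pow I m)) P.
  move=> m P Hm HA; have [J1 [J2 J3]] := Pk m.+1.
  case: (Ass_split J1 J2 J3 (Hsupp m.+1) HA) => [H|[HP [f Hf]]]; first by left.
  right; have [j [Hbj Ej]] := colon_prime HP Hf.
  have Haj : (0 < a j)%N by move: Hbj; rewrite mulmnE muln_gt0 => /andP [].
  case: (classic (exists F, I F /\ F != 0)) => [[F [HF Fn]]|Hn].
    have : msupp F != [::] by rewrite msupp_eq0.
    case Es: (msupp F) => [|m0 s0] // _.
    have Hm0 : I 'X_[m0] by apply: (MC_mon HI MI HF); rewrite -mcoeff_msupp Es mem_head.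
    have Hpow := pow_mem m _ Hm0; rewrite mpolyXn in Hpow.
    have [K1 [K2 K3]] := Pk m; have Hz := K3 _ Hpow.
    apply: Ass_same (Ass_xj K1 Hm Haj Hz (zf_j _ Haj)) _.
    by move=> y; split; move/Ej.
  exfalso; case: HA => [HP' [f0 Hf0]].
  have : P 'X_j by apply/Ej; exists 1; rewrite mulr1.
  move/Hf0 => [q Hq E].
  have q0 : q = 0.
    apply: NNPP => Hq0; apply: Hn; exists q; split; [exact: Ipos Hq | exact/eqP].
  move: E; rewrite q0 mulr0 => /eqP; rewrite mulf_eq0 (negbTE (X_neq0 K _)) /= => /eqP f00.
  case: HP => _ [H1 _]; apply: H1; apply/Hf0; rewrite f00 mulr0; exists 0; last by rewrite mulr0.
  apply: ideal0; exact: (Pk m.+1).1.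
have StepB : forall m P, Ass (ideal_pow I m.+1) P ->
    Ass (sc 'X_[(a *+ m)%MM] (ideal_pow I m)) P -> Ass (ideal_pow I m) P.
  move=> m P HA HB; have [J1 [J2 J3]] := Pk m.
  case: (Ass_split J1 J2 J3 (Hsupp m) HB) => [//|[HP [f Hf]]].
  exfalso; case: HA => [_ [f1 Hf1]]; have [K1 [K2 K3]] := Pk m.+1.
  have : P 'X_[(a *+ m)%MM] by apply/Hf; exists f.
  move/Hf1 => H; have H' := regular K1 K2 K3 (Hsupp m) H.
  case: HP => _ [H1 _]; apply: H1; apply/Hf1; by rewrite mul1r.
split.
  move=> [s [p [Hs [Hp [H1 H2]]]]]; exists s, p; split => //; split => //; split.
    move=> m Hm P /EB HA; have Hm0 : (0 < m)%N by case/andP: Hm.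
    case: (StepF m P Hm0 HA) => [H|H]; last by left; apply/EB.
    case: (H1 m Hm P H) => [H'|H']; [left; apply/EB; exact: L1 | by right].
  move=> m Hm P /EB HA; have Hm0 : (0 < m)%N by apply: leq_trans Hm; rewrite ltnS.
  apply/EB; case: (StepF m P Hm0 HA) => [H|//]; exact: L1 (H2 m Hm P H).
move=> [s [p [Hs [Hp [H1 H2]]]]]; exists s, p; split => //; split => //; split.
  move=> m Hm P HA.
  case: (H1 m Hm P (proj2 (EB _ _) (L1 _ _ HA))) => [H|H]; last by right.
  by left; apply: StepB HA _; apply/EB.
move=> m Hm P HA; have HA2 := HA; apply: StepB HA2 _; apply/EB; apply: H2 Hm _ _; apply/EB; exact: L1 _ _ HA.
Qed.
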